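(* Let $k\ge 2$ and let $a$ be a nonnegative integer with $a\le k-2$ and $a+k-1$ odd. Let $P(x_1,\dots,x_k)=\operatorname{sign}(a x_1+x_2+\cdots+x_k)$ and $\tau=\lfloor (k-a-1)/2\rfloor$. Then: (1) $\hat P_{\{1\}}=1-\frac{1}{2^{k-2}}\sum_{l=0}^{\tau}\binom{k-1}{l}$; (2) for every odd $t$ with $1\le t\le k-1$ and every set $I\subseteq\{2,\dots,k\}$ with $|I|=t$, \[\hat P_I=\frac{1}{2^{k-2}}\sum_{i=0}^{\tau}\sum_{j=0}^{\tau-i}(-1)^j\binom{k-t-1}{i}\binom{t}{j};\] (3) for every even $t$ with $2\le t\le k-1$ and every set $I=\{1\}\cup J$ with $J\subseteq\{2,\dots,k\}$, $|J|=t$, \[\hat P_I=-\frac{1}{2^{k-2}}\sum_{i=0}^{\tau}\sum_{j=0}^{\tau-i}(-1)^j\binom{k-t-1}{i}\binom{t}{j}.\]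
   Context: For $P:\{-1,1\}^k\to\{-1,1\}$ and $I\subseteq[k]$, the Fourier coefficient is $\hat P_I=\mathbb{E}_{x\in\{-1,1\}^k}[P(x)\prod_{i\in I}x_i]$ with $x$ uniform. Index $1$ is called the president and indices $2,\dots,k$ the citizens. *)

(* Defs.v *)
(* Index set [k] is modelled by 'I_k; the paper's index 1
   (president) is the ordinal with value 0, indices 2..k are values 1..k-1. *)
From HB Require Import structures.
From mathcomp Require Import all_boot all_order all_algebra.
Unset Printing Implicit Defensive.
Import Order.TTheory GRing.Theory Num.Theory.
Local Open Scope ring_scope.

(* A point of {-1,1}^k is encoded by a boolean vector; true ↦ 1, false ↦ -1. *)
Definition pm1 (b : bool) : rat := if b then 1 else -1.

Definition fourier (k : nat) (P : {ffun 'I_k -> bool} -> rat) (I : {set 'I_k}) : rat :=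
  (#|{ffun 'I_k -> bool}|%:R)^-1 *
    \sum_(x : {ffun 'I_k -> bool}) P x * \prod_(i in I) pm1 (x i).

Definition president (k : nat) : {set 'I_k} := [set i : 'I_k | val i == 0%N].

Definition weighted_maj (k a : nat) (x : {ffun 'I_k -> bool}) : rat :=
  Num.sg (\sum_(i : 'I_k) (if val i == 0%N then a%:R else 1) * pm1 (x i)).

(* Main.v *)
Require Import Defs.
From HB Require Import structures.
From mathcomp Require Import all_boot all_order all_algebra.
From mathcomp Require Import zify ring lra.
Import Order.TTheory GRing.Theory Num.Theory.
Local Open Scope ring_scope.
Definition chi k (I : {set 'I_k}) (x : {ffun 'I_k -> bool}) : rat :=
  \prod_(i in I) pm1 (x i).
Definition negf k (x : {ffun 'I_k -> bool}) : {ffun 'I_k -> bool} :=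
  [ffun i => ~~ x i].
Arguments chi {k}.
Arguments negf {k}.

Lemma pm1N b : pm1 (~~ b) = - pm1 b.
Proof. by case: b; rewrite /pm1 ?opprK. Qed.

Lemma negfK k : involutive (@negf k).
Proof. by move=> x; apply/ffunP=> i; rewrite !ffunE negbK. Qed.

Lemma chi_neg k (I : {set 'I_k}) (x : {ffun 'I_k -> bool}) :
  chi I (negf x) = (-1) ^+ #|I| * chi I x.
Proof.
rewrite /chi -prodrN; apply: eq_bigr => i _; by rewrite ffunE pm1N.
Qed.

Lemma wm_neg k a (x : {ffun 'I_k -> bool}) :
  weighted_maj k a (negf x) = - weighted_maj k a x.
Proof.
rewrite /weighted_maj -sgrN -sumrN; congr Num.sg; apply: eq_bigr => i _.
by rewrite ffunE pm1N mulrN.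
Qed.

Lemma sum_split k (z : 'I_k) (F : {ffun 'I_k -> bool} -> rat) :
  \sum_x F x = \sum_(x : {ffun 'I_k -> bool} | ~~ x z) (F x + F (negf x)).
Proof.
rewrite (bigID (fun x : {ffun 'I_k -> bool} => x z)) /= addrC big_split /=; congr (_ + _).
rewrite (reindex (@negf k)) /=; last first.
  by exists (@negf k) => y _; rewrite negfK.
by apply: eq_bigl => y; rewrite ffunE.
Qed.
Definition mcnt k (z : 'I_k) (x : {ffun 'I_k -> bool}) : nat :=
  #|[set i | (i != z) && ~~ x i]|.

Arguments mcnt {k}.

Lemma sum_cnt k (P Q : pred 'I_k) :
  \sum_(i | P i) (if Q i then 1 else 0 : rat) = (#|[set i | P i && Q i]|)%:R.
Proof.
rewrite -big_mkcondr -sum1dep_card natr_sum. by apply: eq_bigr.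
Qed.

Lemma wm_false k a (z : 'I_k) (hz : val z = 0%N) (x : {ffun 'I_k -> bool}) (hx : ~~ x z) tau
  (htau : (k - 1 = a + tau.*2.+1)%N) :
  weighted_maj k a x = if (mcnt z x <= tau)%N then 1 else -1.
Proof.
rewrite /weighted_maj (bigD1 z) //= hz eqxx (negbTE hx) /pm1 /=.
have -> : \sum_(i < k | i != z) (if val i == 0%N then a%:R else 1) * pm1 (x i)
   = \sum_(i < k | i != z) (1 - 2 * (if ~~ x i then 1 else 0) : rat).
  apply: eq_bigr => i hi.
  have -> : (val i == 0%N) = false.
    by apply/negbTE; apply: contra hi => /eqP h; apply/eqP/val_inj; rewrite /= h hz.
  by rewrite mul1r /pm1; case: (x i); rewrite /=; lra.
rewrite sumrB -mulr_sumr sum_cnt.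
have -> : \sum_(i < k | i != z) (1 : rat) = (k - 1)%:R.
  by rewrite sumr_const cardC1 card_ord subn1.
rewrite htau /mcnt; set m := #|_|.
have -> : a%:R * -1 + ((a + tau.*2.+1)%:R - 2 * m%:R) = (tau.*2.+1)%:R - (m.*2)%:R :> rat.
  have -> : (m.*2)%:R = 2 * m%:R :> rat by rewrite -muln2 natrM mulrC.
  rewrite natrD; lra.
case: ifP => hm.
  by apply: gtr0_sg; rewrite subr_gt0 ltr_nat; lia.
by apply: ltr0_sg; rewrite subr_lt0 ltr_nat; lia.
Qed.
Definition flipf k (j : 'I_k) (x : {ffun 'I_k -> bool}) : {ffun 'I_k -> bool} :=
  [ffun i => if i == j then ~~ x i else x i].

Arguments flipf {k}.

Lemma flipfK k (j : 'I_k) : involutive (flipf j).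
Proof. by move=> x; apply/ffunP=> i; rewrite !ffunE; case: eqP; rewrite ?negbK. Qed.

Lemma chi_flip k (J : {set 'I_k}) j x : j \in J -> chi J (flipf j x) = - chi J x.
Proof.
move=> hj; rewrite /chi !(bigD1 j hj) /= ffunE eqxx pm1N mulNr; congr (- (_ * _)).
by apply: eq_bigr => i /andP [_ /negbTE hi]; rewrite ffunE hi.
Qed.

Lemma H_zero k (z : 'I_k) (J : {set 'I_k}) j : j \in J -> j != z ->
  \sum_(x : {ffun 'I_k -> bool} | ~~ x z) chi J x = 0.
Proof.
move=> hj hjz; set S := \sum_(x | _) _.
have : S = - S.
  rewrite {1}/S (reindex (flipf j)) /=; last by exists (flipf j) => y _; rewrite flipfK.
  rewrite /S -sumrN; apply: eq_big => y.
    by rewrite ffunE eq_sym (negbTE hjz).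
  by move=> _; rewrite chi_flip.
lra.
Qed.
Lemma sum_subsets (T : finType) (J : {set T}) (g : nat -> rat) :
  \sum_(A : {set T} | A \subset J) g #|A| =
  \sum_(0 <= j < #|J|.+1) ('C(#|J|, j))%:R * g j.
Proof.
rewrite big_mkord.
rewrite (partition_big (fun A : {set T} => (inord #|A| : 'I_(#|J|.+1))) predT) //=.
apply: eq_bigr => j _.
transitivity (\sum_(A : {set T} | (A \subset J) && (#|A| == j)) g j).
  apply: eq_big => A.
    case sA: (A \subset J) => //=.
    have le := subset_leq_card sA.
    apply/eqP/eqP => [<-|h]; last by apply: val_inj; rewrite /= -h inordK.
    by rewrite inordK.
  by move=> /andP[sA /eqP <-]; rewrite inordK // ltnS subset_leq_card.
rewrite sumr_const mulr_natl; congr (_ *+ _).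
rewrite -cards_draws; apply: eq_card => B; by rewrite inE.
Qed.
Definition hp k (z : 'I_k) (p : {set 'I_k} * {set 'I_k}) : {ffun 'I_k -> bool} :=
  [ffun i => (i != z) && (i \notin p.1) && (i \notin p.2)].
Definition hp' k (J K : {set 'I_k}) (x : {ffun 'I_k -> bool}) :=
  ([set i in J | ~~ x i], [set i in K | ~~ x i]).
Arguments hp {k}.
Arguments hp' {k}.

Lemma G_pairs k (z : 'I_k) (J : {set 'I_k}) (F : {ffun 'I_k -> bool} -> rat) :
  z \notin J ->
  \sum_(x : {ffun 'I_k -> bool} | ~~ x z) F x =
  \sum_(p : {set 'I_k} * {set 'I_k} | (p.1 \subset J) && (p.2 \subset ~: (z |: J))) F (hp z p).
Proof.
move=> hzJ.
rewrite (reindex_onto (hp z) (hp' J (~: (z |: J)))) => [|x hx]; last first.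
  apply/ffunP => i; rewrite !ffunE /= !inE.
  case: (eqVneq i z) => [->|hiz]; first by rewrite (negbTE hx).
  by case: (i \in J); case: (x i).
apply: eq_bigl => -[A B]; rewrite ffunE eqxx /= /hp' xpair_eqE.
apply/andP/andP => [[/eqP <- /eqP <-] | [sA sB]].
  by split; apply/subsetP => i; rewrite inE => /andP[].
split; apply/eqP/setP => i; rewrite !inE ffunE /=;
  have h0 : i \in J -> i != z by move=> hi; apply: contraNneq hzJ => <-.
all: 
  move: h0 (subsetP sA i) (subsetP sB i); rewrite !inE;
  move=> /implyP h1 /implyP h2 /implyP h3; move: h1 h2 h3;
  by case: (i \in J); case: (i \in A); case: (i \in B); case: (i == z).
Qed.
Lemma hp_vals k (z : 'I_k) (J A B : {set 'I_k}) :
  z \notin J -> A \subset J -> B \subset ~: (z |: J) ->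
  mcnt z (hp z (A, B)) = (#|A| + #|B|)%N /\ chi J (hp z (A, B)) = (-1) ^+ #|A|.
Proof.
move=> hzJ sA sB.
have hA i : i \in A -> (i \in J) && (i != z).
  by move=> /(subsetP sA) hi; rewrite hi; apply: contraNneq hzJ => <-.
have hB i : i \in B -> (i \notin J) && (i != z).
  by move=> /(subsetP sB); rewrite !inE negb_or => /andP[-> ->].
split.
  rewrite /mcnt.
  have -> : [set i | (i != z) && ~~ hp z (A, B) i] = A :|: B.
    apply/setP => i; rewrite !inE ffunE /=.
    case iA: (i \in A); first by case/andP: (hA i iA) => _ ->.
    case iB: (i \in B); first by case/andP: (hB i iB) => _ ->.
    by case: (i != z).
  rewrite cardsU.
  have -> : A :&: B = set0.
    apply/setP => i; rewrite !inE; apply/negbTE; apply/andP => -[iA iB].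
    by case/andP: (hA i iA) => iJ _; case/andP: (hB i iB); rewrite iJ.
  by rewrite cards0 subn0.
rewrite /chi.
transitivity (\prod_(i in J) (if i \in A then -1 else 1 : rat)).
  apply: eq_bigr => i iJ; rewrite ffunE /= /pm1.
  have iz : i != z by apply: contraNneq hzJ => <-.
  have iB : i \notin B by apply/negP => /hB; rewrite iJ.
  by rewrite iz iB andbT; case: (i \in A).
rewrite -big_mkcondr /= -prodr_const; apply: eq_bigl => i.
case iA: (i \in A); last by rewrite andbF.
by case/andP: (hA i iA) => -> _.
Qed.
Lemma widen (f : nat -> rat) n M : (n <= M)%N ->
  (forall j, (n <= j < M)%N -> f j = 0) ->
  \sum_(0 <= j < n) f j = \sum_(0 <= j < M) f j.
Proof.
move=> hnM h0; rewrite [RHS](@big_cat_nat _ _ _ n) //= [X in _ = _ + X]big1_seq ?addr0 //.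
by move=> j /andP[_]; rewrite mem_index_iota; apply: h0.
Qed.

Lemma sum_rearr (N t tau : nat) :
  \sum_(0 <= j < t.+1) ('C(t, j))%:R *
     \sum_(0 <= i < N.+1) ('C(N, i))%:R * (if (j + i <= tau)%N then (-1) ^+ j else 0 : rat)
  = \sum_(0 <= i < tau.+1) \sum_(0 <= j < (tau - i).+1)
       (-1) ^+ j * ('C(N, i))%:R * ('C(t, j))%:R.
Proof.
pose M := (N + t + tau).+1.
transitivity (\sum_(0 <= i < M) \sum_(0 <= j < M)
   (if (j + i <= tau)%N then (-1) ^+ j * ('C(N, i))%:R * ('C(t, j))%:R else 0 : rat)).
  rewrite (widen _ (t.+1) M); last 2 first.
  - by rewrite /M; lia.
  - by move=> j /andP[hj _]; rewrite bin_small // mul0r.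
  transitivity (\sum_(0 <= j < M) \sum_(0 <= i < M)
   (if (j + i <= tau)%N then (-1) ^+ j * ('C(N, i))%:R * ('C(t, j))%:R else 0 : rat));
    last by rewrite exchange_big.
  apply: eq_bigr => j _.
  rewrite (widen _ (N.+1) M); last 2 first.
  - by rewrite /M; lia.
  - by move=> i /andP[hi _]; rewrite bin_small // mul0r.
  rewrite mulr_sumr; apply: eq_bigr => i _.
  by case: ifP => _; rewrite ?mulr0 //; ring.
transitivity (\sum_(0 <= i < tau.+1) \sum_(0 <= j < M)
   (if (j + i <= tau)%N then (-1) ^+ j * ('C(N, i))%:R * ('C(t, j))%:R else 0 : rat)).
  symmetry; apply: widen; first by rewrite /M; lia.
  move=> i /andP[hi _]; apply: big1 => j _.
  by rewrite ifF //; apply/negbTE; rewrite -ltnNge; lia.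
apply: eq_big_nat => i /andP[_ hi].
symmetry.
rewrite (eq_big_nat _ _ (F2 := fun j =>
   (if (j + i <= tau)%N then (-1) ^+ j * ('C(N, i))%:R * ('C(t, j))%:R else 0 : rat))); last first.
  by move=> j /andP[_ hj]; rewrite ifT //; lia.
apply: widen; first by rewrite /M; lia.
by move=> j /andP[hj _]; rewrite ifF //; apply/negbTE; rewrite -ltnNge; lia.
Qed.
Lemma G_formula k (z : 'I_k) (J : {set 'I_k}) tau : z \notin J ->
  \sum_(x : {ffun 'I_k -> bool} | ~~ x z) (if (mcnt z x <= tau)%N then chi J x else 0)
  = \sum_(0 <= i < tau.+1) \sum_(0 <= j < (tau - i).+1)
       (-1) ^+ j * ('C(k - #|J| - 1, i))%:R * ('C(#|J|, j))%:R.
Proof.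
move=> hzJ; set K := ~: (z |: J).
have cK : #|K| = (k - #|J| - 1)%N.
  have := cardsC (z |: J); rewrite cardsU1 hzJ card_ord /K /=.
  move: #|~: _| => X; move: #|J| => Y.
  move=> h; lia.
rewrite (G_pairs _ _ _ _ hzJ) -cK -sum_rearr.
transitivity (\sum_(A : {set 'I_k} | A \subset J) \sum_(B : {set 'I_k} | B \subset K)
   (if (#|A| + #|B| <= tau)%N then (-1) ^+ #|A| else 0 : rat)).
  rewrite pair_big /=; apply: eq_bigr => -[A B] /andP[sA sB] /=.
  by have [-> ->] := hp_vals _ _ _ _ _ hzJ sA sB.
transitivity (\sum_(A : {set 'I_k} | A \subset J) \sum_(0 <= i < #|K|.+1)
   ('C(#|K|, i))%:R * (if (#|A| + i <= tau)%N then (-1) ^+ #|A| else 0 : rat)).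
  apply: eq_bigr => A _.

  exact: (sum_subsets _ K (fun b => if (#|A| + b <= tau)%N then (-1) ^+ #|A| else 0 : rat)).
exact: (sum_subsets _ J (fun a => \sum_(0 <= i < #|K|.+1)
   ('C(#|K|, i))%:R * (if (a + i <= tau)%N then (-1) ^+ a else 0 : rat))).
Qed.
Lemma card_cube k : #|{ffun 'I_k -> bool}|%:R = (2 : rat) ^+ k.
Proof. by rewrite card_ffun card_bool card_ord natrX. Qed.

Lemma fourier_main k a (z : 'I_k) (hz : val z = 0%N) tau
  (htau : (k - 1 = a + tau.*2.+1)%N) (I J : {set 'I_k}) (s : rat) :
  odd #|I| -> (forall x : {ffun 'I_k -> bool}, ~~ x z -> chi I x = s * chi J x) ->
  fourier k (weighted_maj k a) I =
  ((2 : rat) ^+ k)^-1 * (2 * (s * (2 *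
     (\sum_(x : {ffun 'I_k -> bool} | ~~ x z) (if (mcnt z x <= tau)%N then chi J x else 0))
     - \sum_(x : {ffun 'I_k -> bool} | ~~ x z) chi J x))).
Proof.
move=> oI hIJ; rewrite /fourier card_cube; congr (_ * _).
have e : forall y : {ffun 'I_k -> bool}, \prod_(i in I) pm1 (y i) = chi I y by [].
rewrite (sum_split _ z) [X in _ * (_ * (X - _))]mulr_sumr -sumrB mulr_sumr mulr_sumr.
apply: eq_bigr => x hx; rewrite !e wm_neg chi_neg -signr_odd oI expr1.
rewrite (wm_false _ _ _ hz _ hx _ htau) hIJ //.
by case: ifP => _; ring.
Qed.

Lemma sum_all_half k (z : 'I_k) :
  \sum_(x : {ffun 'I_k -> bool} | ~~ x z) (1 : rat) = (2 : rat) ^+ k / 2.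
Proof.
have := sum_split _ z (fun _ => (1 : rat)); rewrite sumr_const card_cube big_split /= => ->.
by field.
Qed.
Lemma S0 (n tau : nat) :
  \sum_(0 <= i < tau.+1) \sum_(0 <= j < (tau - i).+1)
       (-1) ^+ j * ('C(n, i))%:R * ('C(0, j))%:R
  = \sum_(0 <= l < tau.+1) ('C(n, l))%:R :> rat.
Proof.
apply: eq_bigr => i _; rewrite big_nat_recl // big1 ?addr0 => [|j _].
  by rewrite expr0 bin0 mul1r mulr1.
by rewrite bin0n /= mulr0.
Qed.

Theorem lemma2p1 (k a : nat) (hk : (2 <= k)%N) (ha : (a <= k - 2)%N)
    (hodd : odd (a + k - 1)) :
  let P := weighted_maj k a in
  let tau := ((k - a - 1)./2)%N in
  let S (t : nat) : rat :=
    \sum_(0 <= i < tau.+1) \sum_(0 <= j < (tau - i).+1)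
       (-1) ^+ j * ('C(k - t - 1, i))%:R * ('C(t, j))%:R in
  [/\ fourier k P (president k) =
        1 - (2%:R ^+ (k - 2))^-1 * \sum_(0 <= l < tau.+1) ('C(k - 1, l))%:R,
      (forall (t : nat) (I : {set 'I_k}), odd t -> (1 <= t <= k - 1)%N ->
         (forall i, i \in I -> val i != 0%N) -> #|I| = t ->
         fourier k P I = (2%:R ^+ (k - 2))^-1 * S t)
    & (forall (t : nat) (J : {set 'I_k}), ~~ odd t -> (2 <= t <= k - 1)%N ->
         (forall i, i \in J -> val i != 0%N) -> #|J| = t ->
         fourier k P (president k :|: J) = - ((2%:R ^+ (k - 2))^-1 * S t))].
Proof.
move=> P tau S.
have hk0 : (0 < k)%N by lia.
pose z := Ordinal hk0.
have hz : val z = 0%N by [].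
have pres : president k = [set z] by apply/setP => i; rewrite !inE -val_eqE.
have htau : (k - 1 = a + tau.*2.+1)%N.
  have e : (a + k - 1 = (k - a - 1) + a.*2)%N by rewrite -addnn; lia.
  rewrite e oddD odd_double addbF in hodd.
  have := odd_double_half (k - a - 1); rewrite hodd /tau; move: ((k - a - 1)./2) => h.
  rewrite -!muln2; lia.
have hzI : forall I : {set 'I_k}, (forall i, i \in I -> val i != 0%N) -> z \notin I.
  by move=> I hI; apply/negP => /hI; rewrite hz.
have hne : forall I : {set 'I_k}, (forall i, i \in I -> val i != 0%N) -> (0 < #|I|)%N ->
    \sum_(x : {ffun 'I_k -> bool} | ~~ x z) chi I x = 0.
  move=> I hI /card_gt0P [j hj]; apply: (H_zero _ z I j hj).
  by apply: contraNneq (hI j hj) => ->.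
have e2 : (2 : rat) ^+ k = 2 ^+ (k - 2) * 4 by rewrite -{1}(subnK hk) exprD.
have nz : (2 : rat) ^+ (k - 2) != 0 by rewrite expf_neq0.
split.
- rewrite pres (fourier_main _ _ z hz tau htau [set z] set0 (-1)); last 2 first.
  + by rewrite cards1.
  + by move=> x hx; rewrite /chi big_set1 big_set0 (negbTE hx) mulr1.
  have -> : \sum_(x : {ffun 'I_k -> bool} | ~~ x z) chi set0 x = (2 : rat) ^+ k / 2.
    by rewrite -(sum_all_half _ z); apply: eq_bigr => x _; rewrite /chi big_set0.
  rewrite G_formula ?in_set0 // cards0 subn0 S0 e2.
  by field.
- move=> t I ot ht hI cI.
  rewrite (fourier_main _ _ z hz tau htau I I 1) ?cI //; last by move=> x _; rewrite mul1r.
  rewrite (hne I hI) ?cI; last by lia.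
  rewrite G_formula ?hzI // cI /S e2.
  by field.
- move=> t J et ht hJ cJ.
  have hzJ := hzI J hJ.
  rewrite pres (fourier_main _ _ z hz tau htau (z |: J) J (-1)); last 2 first.
  + by rewrite cardsU1 hzJ cJ /= (negbTE et).
  + by move=> x hx; rewrite /chi big_setU1 //= (negbTE hx).
  rewrite (hne J hJ) ?cJ; last by lia.
  rewrite G_formula // cJ /S e2.
  by field.
Qed.
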